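(* For all integers $m\ge1$, $n>2m$ and all $\sigma_1^2,\dots,\sigma_n^2>0$, letting $L\subset G^{r}$ with $|L|=2m$ consist of $2m$ arms of $G^{r}$ with the largest variances, we have $\frac{\sum_{i\in L}\sigma_i^2}{\sum_{j\in G^{r}}\sigma_j^2}\ge\frac13$ and \[ \Big(1-\frac{\sum_{i\in L}\sigma_i^2}{\sum_{j\in G^{r}}\sigma_j^2}\Big)\ln(m)\le 4\,\mathrm{Ent}(\sigma^2_L). \]
   Context: For a positive vector $a$, $\mathrm{Ent}(a)=-\sum_i\hat a_i\ln\hat a_i$ with $\hat a_i=a_i/\sum_ja_j$; $\sigma^2_S=(\sigma_i^2)_{i\in S}$. Let $\underline\sigma^2=\min_i\sigma_i^2$, $G_j=\{i\in[n]:2^{j-1}\le\sigma_i^2/\underline\sigma^2<2^j\}$ for $j=1,\dots,k$ covering $[n]$. $G'_j=G_j$ if $|G_j|\le2m$, otherwise $G'_j\subset G_j$ with $|G'_j|=2m$; $G^{r}=\bigcup_jG'_j$, the choices made to maximize $\mathrm{Ent}(\sigma^2_{G^{r}})$. *)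

(* Defs.v *)
From HB Require Import structures.
From mathcomp Require Import all_boot all_order all_algebra.
From mathcomp Require Import all_classical all_reals all_analysis.
Set Implicit Arguments. Unset Strict Implicit. Unset Printing Implicit Defensive.
Import Order.TTheory GRing.Theory Num.Theory.
Local Open Scope ring_scope.

Section Defs.
Variable R : realType.

Definition ent (n : nat) (a : 'I_n -> R) (S : {set 'I_n}) : R :=
  let tot := \sum_(j in S) a j in
  - \sum_(i in S) (a i / tot) * ln (a i / tot).

Definition minvar (n : nat) (a : 'I_n -> R) : R :=
  match n return ('I_n -> R) -> R with
  | 0 => fun _ => 0
  | n'.+1 => fun a => \big[Order.min/a ord0]_(i < n'.+1) a i
  end a.

(* G_j = { i : 2^(j-1) <= a_i / min a < 2^j }, meaningful for j >= 1 *)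
Definition group (n : nat) (a : 'I_n -> R) (j : nat) : {set 'I_n} :=
  [set i | (2 ^+ j.-1 <= a i / minvar a) && (a i / minvar a < 2 ^+ j)].

(* G^r = union of G'_j where G'_j = G_j if |G_j| <= 2m, otherwise
   G'_j is a subset of G_j of size 2m (G'_j = G^r :&: G_j). *)
Definition reduced (m n : nat) (a : 'I_n -> R) (Gr : {set 'I_n}) : Prop :=
  forall j : nat, (0 < j)%N ->
    if (#|group a j| <= 2 * m)%N then Gr :&: group a j = group a j
    else #|Gr :&: group a j| = (2 * m)%N.

Definition reduced_max (m n : nat) (a : 'I_n -> R) (Gr : {set 'I_n}) : Prop :=
  reduced m a Gr /\ forall Gr', reduced m a Gr' -> ent a Gr' <= ent a Gr.

Definition top_subset (k n : nat) (a : 'I_n -> R) (G L : {set 'I_n}) : Prop :=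
  [/\ L \subset G, #|L| = k &
      forall i j, i \in L -> j \in G :\: L -> a j <= a i].

End Defs.

(* Main.v *)
Require Import Defs.
From HB Require Import structures.
From mathcomp Require Import all_boot all_order all_algebra.
From mathcomp Require Import all_classical all_reals all_analysis.
From mathcomp Require Import ring lra.
Import Order.TTheory GRing.Theory Num.Theory.
Local Open Scope ring_scope.

Lemma ln_conc (R : realType) (w X : R) : 0 <= w -> w <= 1 -> 0 < X ->
  w * ln X <= ln (w * X + (1 - w)).
Proof.
move=> w0 w1 X0.
have := @concave_ln R (Itv01 w0 w1) X 1 X0 ltr01.
by rewrite !convRE /= ln1 mulr0 addr0 mulr1.
Qed.

Lemma elem_bound (R : realType) (p q : R) : 0 < q -> q <= p -> p <= 1 -> q < 1 ->
  (1 - p) / (1 - q) * (q * ln q^-1) <= p * ln p^-1.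
Proof.
move=> q0 qp p1 q1.
have p0 : 0 < p by apply: lt_le_trans qp.
have q1' : 0 < 1 - q by rewrite subr_gt0.
have pn : p != 0 by rewrite gt_eqF.
have qn : q != 0 by rewrite gt_eqF.
have qn' : 1 - q != 0 by rewrite gt_eqF.
pose w : R := (1 - p) * q / ((1 - q) * p).
have w0 : 0 <= w by rewrite /w divr_ge0 // ?mulr_ge0 // ?subr_ge0 // ltW.
have w1 : w <= 1.
  rewrite /w ler_pdivrMr ?mulr_gt0 // mul1r.
  nra.
have qi0 : 0 < q^-1 by rewrite invr_gt0.
have E1 : w * q^-1 + (1 - w) = p^-1.
  by rewrite /w; clear w0 w1; field; rewrite ?pn ?qn ?qn'.
have E2 : (1 - p) / (1 - q) * (q * ln q^-1) = p * (w * ln q^-1).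
  by rewrite /w; clear w0 w1; field; rewrite ?pn ?qn ?qn'.
have H := @ln_conc R w q^-1 w0 w1 qi0.
rewrite E1 in H; rewrite E2.
by apply: ler_wpM2l => //; apply: ltW.
Qed.

Lemma ent_lb (R : realType) n (a : 'I_n -> R) (S : {set 'I_n}) (v : R) :
  (forall i, 0 < a i) -> 0 < v -> (forall i, i \in S -> v <= a i) -> (2 <= #|S|)%N ->
  (#|S|.-1)%:R * ((v / \sum_(j in S) a j) * ln (v / \sum_(j in S) a j)^-1) <= ent a S.
Proof.
move=> apos v0 hv h2.
set A := \sum_(j in S) a j.
set q := v / A.
have Av : #|S|%:R * v <= A.
  rewrite /A mulr_natl -sumr_const.
  by apply: ler_sum => i /hv.
have k2 : (2 : R) <= #|S|%:R by rewrite (ler_nat R 2).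
have A0 : 0 < A by apply: lt_le_trans Av; rewrite mulr_gt0 // (lt_le_trans _ k2).
have q0 : 0 < q by rewrite divr_gt0.
have q1 : q < 1 by rewrite ltr_pdivrMr // mul1r; apply: lt_le_trans Av; nra.
have pi1 : forall i, i \in S -> a i / A <= 1.
  move=> i iS; rewrite ler_pdivrMr // mul1r /A (bigD1 i) //=.
  by rewrite lerDl sumr_ge0 // => j _; apply: ltW.
have piq : forall i, i \in S -> q <= a i / A.
  by move=> i iS; rewrite /q ler_pM2r ?invr_gt0 // hv.
have c0 : 0 <= q * ln q^-1.
  apply: mulr_ge0; [exact: ltW | apply: ln_ge0; rewrite invf_ge1 //; exact: ltW].
have E : \sum_(i in S) (1 - a i / A) = #|S|%:R - 1.
  rewrite sumrB sumr_const -mulr_suml -/A divff ?gt_eqF //.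
have H1 : \sum_(i in S) (1 - a i / A) / (1 - q) * (q * ln q^-1) <= ent a S.
  rewrite /ent -/A -sumrN; apply: ler_sum => i iS.
  have ai0 : 0 < a i / A by rewrite divr_gt0.
  rewrite -[X in _ <= X]mulrN; have -> : - ln (a i / A) = ln ((a i / A)^-1) by rewrite lnV.
  by apply: elem_bound => //; [apply: piq | apply: pi1].
apply: le_trans H1.
rewrite -big_distrl -big_distrl /= E.
have -> : (#|S|.-1)%:R = #|S|%:R - 1 :> R.
  by case: #|S| h2 => // k _; rewrite -natr1 addrK.
rewrite -mulrA; apply: ler_wpM2l; first by rewrite subr_ge0 (le_trans _ k2) // ler1n.
apply: ler_peMl => //.
rewrite invf_ge1 ?subr_gt0 // lerBlDr lerDl; exact: ltW.
Qed.

Lemma exists_k (R : realType) (r : R) : 1 <= r -> exists k : nat, (2:R)^+k <= r < 2^+k.+1.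
Proof.
move=> r1.
have [N hN] : exists N : nat, r < 2^+N.
  have r0 : 0 <= r by apply: le_trans r1.
  exists (Num.bound r); apply: (lt_le_trans (archi_boundP r0)).
  rewrite -natrX ler_nat; apply: ltnW; exact: ltn_expl.
elim: N hN => [|N IH] hN.
  by rewrite expr0 in hN; move: (lt_le_trans hN r1); rewrite ltxx.
case: (ltP r (2^+N)) => h; first exact: IH.
by exists N; rewrite h hN.
Qed.

Lemma sub_sum (R : realType) (I : finType) (P Q : pred I) (F : I -> R) :
  (forall i, P i -> Q i) -> (forall i, 0 <= F i) ->
  \sum_(i | P i) F i <= \sum_(i | Q i) F i.
Proof.
move=> PQ F0; rewrite [X in _ <= X]big_mkcond [X in X <= _]big_mkcond.
apply: ler_sum => i _; case: (boolP (P i)) => Pi.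
  by rewrite (PQ _ Pi).
by case: (Q i).
Qed.

Lemma group_sum (R : realType) n (a : 'I_n -> R) (mu : R) (Gr : {set 'I_n})
  (G : nat -> {set 'I_n}) (m : nat) :
  0 < mu -> (forall i, mu <= a i) ->
  (forall k i, (i \in G k) = (2^+k <= a i / mu) && (a i / mu < 2^+k.+1)) ->
  (forall k, #|Gr :&: G k| <= 2 * m)%N ->
  forall k, \sum_(i in Gr | a i / mu < 2^+k) a i <= (2 * m)%:R * (mu * 2^+k.+1).
Proof.
move=> mu0 mule hG cap; elim=> [|k IH].
  rewrite big1; first by rewrite mulr_ge0 // mulr_ge0 // ltW.
  move=> i /andP [_ h]; exfalso; move: h; rewrite expr0 ltr_pdivrMr // mul1r.
  by rewrite ltNge mule.
rewrite (bigID (fun i => a i / mu < 2^+k)) /=.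
have E1 : \sum_(i | (i \in Gr) && (a i / mu < 2^+k.+1) && (a i / mu < 2^+k)) a i
   = \sum_(i in Gr | a i / mu < 2^+k) a i.
  apply: eq_bigl => i; case: (boolP (a i / mu < 2^+k)) => h; last by rewrite !andbF.
  case: (i \in Gr) => //=; rewrite !andbT.
  apply/idP; apply: (lt_le_trans h); rewrite exprS ler_peMl ?exprn_ge0 // ler1n // exprn_ge0.
rewrite E1.
have E2 : \sum_(i | (i \in Gr) && (a i / mu < 2^+k.+1) && ~~ (a i / mu < 2^+k)) a i
   = \sum_(i in Gr :&: G k) a i.
  apply: eq_bigl => i; rewrite !inE hG -leNgt.
  by case: (i \in Gr); case: (_ <= _); case: (_ < _).
rewrite E2.
have E3 : \sum_(i in Gr :&: G k) a i <= (2 * m)%:R * (mu * 2^+k.+1).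
  apply: le_trans (_ : \sum_(i in Gr :&: G k) (mu * 2^+k.+1) <= _).
    apply: ler_sum => i; rewrite !inE hG => /andP [_ /andP [_ h]].
    by move: h; rewrite ltr_pdivrMr // mulrC => h; apply: ltW.
  rewrite sumr_const -[X in X <= _]mulr_natl; apply: ler_wpM2r.
    by rewrite mulr_ge0 // ltW.
  by rewrite ler_nat.
have -> : (2 * m)%:R * (mu * 2 ^+ k.+2) = 2 * ((2 * m)%:R * (mu * 2 ^+ k.+1)) :> R.
  by rewrite [in LHS]exprS; ring.
lra.
Qed.

From mathcomp Require Import finset.

Theorem lemma12 (R : realType) (m n : nat) (sigma2 : 'I_n -> R)
    (Gr L : {set 'I_n}) :
  (1 <= m)%N -> (2 * m < n)%N -> (forall i, 0 < sigma2 i) ->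
  reduced_max m sigma2 Gr -> top_subset (2 * m) sigma2 Gr L ->
  let rho := (\sum_(i in L) sigma2 i) / (\sum_(j in Gr) sigma2 j) in
  3^-1 <= rho /\ (1 - rho) * ln (m%:R : R) <= 4 * ent sigma2 L.
Proof.
case: n sigma2 Gr L => [|n'] a Gr L; first by move=> _; rewrite ltn0.
move=> m1 mn apos [Hred _] [LsubG cardL Ltop] rho.
set mu := minvar a.
have muE : mu = \big[Order.min/a ord0]_(i < n'.+1) a i by [].
have mule : forall i, mu <= a i by move=> i; rewrite muE; apply: bigmin_le.
have mu0 : 0 < mu by rewrite muE; apply: lt_bigmin => // i _.
have hG : forall k i, (i \in group a k.+1) = (2^+k <= a i / mu) && (a i / mu < 2^+k.+1).
  by move=> k i; rewrite /group inE.
have cap : forall k, (#|Gr :&: group a k.+1| <= 2 * m)%N.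
  move=> k; have := Hred k.+1 isT.
  by case: ifP => [h -> // | _ ->].
have gs := @group_sum R _ a mu Gr (fun k => group a k.+1) m mu0 mule hG cap.
have L0 : (0 < #|L|)%N by rewrite cardL muln_gt0 m1.
case/card_gt0P: L0 => i0 i0L.
have [iv [ivL ivmin]] : exists iv, iv \in L /\ forall i, i \in L -> a iv <= a i.
  exists [arg min_(i < i0 in L) a i]%O.
  case: arg_minP => // j jL H; split => // i iL; exact: H.
set v := a iv.
have v0 : 0 < v by apply: apos.
have [k /andP [hk1 hk2]] : exists k : nat, (2:R)^+k <= v / mu < 2^+k.+1.
  by apply: exists_k; rewrite ler_pdivlMr // mul1r mule.
set T := Gr :&: group a k.+1.
have inT : forall i, (i \in T) = (i \in Gr) && ((2^+k <= a i / mu) && (a i / mu < 2^+k.+1)).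
  by move=> i; rewrite /T in_setI hG.
set X := mu * 2^+k.+1.
have vX : v < X by move: hk2; rewrite ltr_pdivrMr // mulrC.
have Xv : X <= 2 * v.
  move: hk1; rewrite ler_pdivlMr // => h.
  by rewrite /X exprS mulrCA; apply: ler_wpM2l => //; rewrite mulrC.
set A := \sum_(i in L) a i.
set B := \sum_(i in Gr :\: L) a i.
have sumGr : \sum_(j in Gr) a j = A + B by rewrite (big_setID L) /= (setIidPr LsubG).
have A_lb : #|L :&: T|%:R * v + #|L :\: T|%:R * X <= A.
  rewrite /A (big_setID T) /=; apply: lerD.
    rewrite mulr_natl -sumr_const; apply: ler_sum => i /setIP [iL _].
    exact: ivmin.
  rewrite mulr_natl -sumr_const; apply: ler_sum => i /setDP [iL niT].
  have iG : i \in Gr by apply: (fintype.subsetP LsubG).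
  have h1 : 2^+k <= a i / mu.
    by apply: (le_trans hk1); rewrite ler_pM2r ?invr_gt0 // ivmin.
  move: niT; rewrite inT iG h1 /= -leNgt ler_pdivlMr // mulrC.
  done.
have cardLT : (#|L :&: T| + #|L :\: T| = 2 * m)%N by rewrite cardsID cardL.
have B_ub : B <= #|T :\: L|%:R * v + (2 * m)%:R * X.
  rewrite /B (big_setID T) /=; apply: lerD.
    have -> : (Gr :\: L) :&: T = T :\: L.
      apply/setP => i; rewrite !inE.
      by case: (i \in L); case: (i \in Gr).
    rewrite mulr_natl -sumr_const; apply: ler_sum => i /setDP [iT niL].
    apply: (Ltop iv) => //; rewrite inE niL /=.
    by move: iT; rewrite inT => /andP [].
  apply: le_trans (gs k); apply: sub_sum => [i|i]; last exact: ltW.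
  move=> /setDP [/setDP [iG niL] niT].
  have aiv : a i <= v by apply: (Ltop iv) => //; rewrite inE niL iG.
  have h2 : a i / mu < 2^+k.+1.
    by rewrite ltr_pdivrMr // mulrC; apply: le_lt_trans vX.
  rewrite iG /= ltNge; apply: contra niT => h.
  by rewrite inT iG h h2.
have cardT : (#|L :&: T| + #|T :\: L| <= 2 * m)%N by rewrite setIC cardsID cap.
set c1 : R := #|L :&: T|%:R.
set c2 : R := #|L :\: T|%:R.
set b1 : R := #|T :\: L|%:R.
set M : R := m%:R.
have hc : c1 + c2 = 2 * M by rewrite /c1 /c2 /M -natrD cardLT natrM.
have hb : c1 + b1 <= 2 * M by rewrite /c1 /b1 /M -natrD -natrM ler_nat.
have c10 : 0 <= c1 by rewrite /c1 ler0n.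
have c20 : 0 <= c2 by rewrite /c2 ler0n.
have b10 : 0 <= b1 by rewrite /b1 ler0n.
rewrite natrM -/M in B_ub.
have B0 : 0 <= B by rewrite /B sumr_ge0 // => i _; apply: ltW.
have X0 : 0 < X by apply: lt_trans vX.
have h1 : c1 * v + c2 * v <= A.
  apply: le_trans A_lb; apply: lerD => //; apply: ler_wpM2l => //; exact: ltW.
have A2 : 2 * M * v <= A by rewrite -hc mulrDl.
have M1 : 1 <= M by rewrite /M ler1n.
have A0 : 0 < A by apply: lt_le_trans A2; rewrite mulr_gt0 // mulr_gt0 // (lt_le_trans _ M1).
have AB : 0 < A + B by lra.
have rhoE : rho = A / (A + B) by rewrite /rho sumGr.
rewrite rhoE; split.
  rewrite ler_pdivlMr //.
  have e1 : b1 * v <= c2 * X by apply: ler_pM; [exact: b10 | exact: ltW | lra | exact: ltW].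
  have e2 : c1 * X <= c1 * (2 * v) by apply: ler_wpM2l.
  have e3 : c1 * X + c2 * X = 2 * M * X by rewrite -mulrDl hc.
  lra.
have -> : 1 - A / (A + B) = B / (A + B).
  by field; rewrite gt_eqF.
have h2 : (2 <= #|L|)%N by rewrite cardL -[X in (X <= _)%N]muln1 leq_pmul2l.
have EL := @ent_lb R _ a L v apos v0 ivmin h2.
rewrite -/A cardL in EL.
have E2 : ((2 * m).-1)%:R + 1 = 2 * M :> R.
  by rewrite natr1 prednK ?muln_gt0 ?m1 // natrM.
set q := v / A in EL.
have q0 : 0 < q by rewrite divr_gt0.
have qA : q * A = v by rewrite /q divfK // gt_eqF.
have Mq : M <= q^-1.
  rewrite /q invf_div ler_pdivlMr //; apply: le_trans A2.
  apply: ler_wpM2r; first exact: ltW.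
  by rewrite ler_peMl // ler1n.
have lM0 : 0 <= ln M by apply: ln_ge0.
have lMq : ln M <= ln q^-1.
  by rewrite ler_ln ?posrE ?invr_gt0 // (lt_le_trans _ M1).
set u := q * ln M.
set w := q * ln q^-1.
have {}EL : (2 * m).-1%:R * w <= ent a L by exact: EL.
have uw : u <= w by apply: ler_wpM2l => //; exact: ltW.
have u0 : 0 <= u by apply: mulr_ge0 => //; exact: ltW.
case: (ltrP M 2) => hM.
  have hm : (m < 2)%N by rewrite -(ltr_nat R).
  have M1e : M = 1.
    by rewrite /M (_ : m = 1%N) //; apply/eqP; rewrite eqn_leq m1 andbT -ltnS.
  rewrite M1e ln1 mulr0.
  have : 0 <= (2 * m).-1%:R * w by rewrite mulr_ge0 ?ler0n // (le_trans u0 uw).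
  lra.
have hB6 : B <= 6 * M * v.
  have e1 : b1 * v <= 2 * M * v by apply: ler_wpM2r; [exact: ltW | lra].
  have e2 : 2 * M * X <= 2 * M * (2 * v) by apply: ler_wpM2l => //; lra.
  lra.
have ht : B / (A + B) <= 6 * M * q.
  rewrite ler_pdivrMr //.
  have -> : 6 * M * q * (A + B) = 6 * M * (q * A) + 6 * M * (q * B) by ring.
  rewrite qA.
  have : 0 <= 6 * M * (q * B).
    by apply: mulr_ge0; [lra | apply: mulr_ge0 => //; exact: ltW].
  lra.
have e1 : B / (A + B) * ln M <= 6 * M * u.
  by rewrite /u mulrA; apply: ler_wpM2r.
have e2 : w - u <= M * w - M * u.
  have : 0 <= (M - 1) * (w - u) by apply: mulr_ge0; lra.
  rewrite mulrBl mul1r mulrBr; lra.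
have e3 : 2 * u <= M * u.
  have : 0 <= (M - 2) * u by apply: mulr_ge0 => //; lra.
  rewrite mulrBl; lra.
have e4 : (2 * m).-1%:R * w = 2 * (M * w) - w.
  by rewrite -(addrK 1 ((2 * m).-1)%:R) E2; ring.
rewrite e4 in EL.
lra.
Qed.
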